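(* Let $G$ be a bipartite graph with bipartition $(X,Y)$, $|X| = n\geq 2$, $|Y|=m$, every $x\in X$ having degree at least $\delta$, and let $(C,x)$ be a tight pair in $G$. If $n\leq\delta$ and $Y\cap V(C)\subseteq N(x)$, then for each $w \in X\cap V(C)$ and each $y\in N(w)\setminus V(C)$, the vertex $w$ separates $y$ from $V(C)\setminus\{w\}$ in $G$ (i.e., every path in $G$ from $y$ to $V(C)\setminus\{w\}$ passes through $w$).
   Context: A tight pair in $G$ is a pair $(C,x)$ where $C$ is a longest cycle in $G$ and $x \in X \setminus V(C)$, chosen such that $|N(x)\cap V(C)|$ is maximum over all pairs $(C',x')$ with $C'$ a longest cycle in $G$ and $x' \in X\setminus V(C')$. *)

(* Defs.v *)
From mathcomp Require Import all_boot.
Set Implicit Arguments. Unset Strict Implicit. Unset Printing Implicit Defensive.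

Section Graphs.
Variable T : finType.
Variable e : rel T.

Definition simple_graph : Prop := symmetric e /\ irreflexive e.

(* (X, ~: X) is a bipartition: every edge joins X to its complement *)
Definition bipartition (X : {set T}) : Prop :=
  forall u v, e u v -> (u \in X) != (v \in X).

Definition nbhd (v : T) : {set T} := [set u | e v u].

(* a cycle: a cyclic sequence of >= 3 distinct vertices, consecutive ones
   (cyclically) adjacent; its vertex set is [set u in c], its length size c *)
Definition is_cycle (c : seq T) : bool :=
  [&& uniq c, 2 < size c & cycle e c].

Definition longest_cycle (c : seq T) : Prop :=
  is_cycle c /\ forall c', is_cycle c' -> size c' <= size c.

Definition tight_pair (X : {set T}) (C : seq T) (x : T) : Prop :=
  [/\ longest_cycle C, x \in X, x \notin C &
      forall C' x', longest_cycle C' -> x' \in X -> x' \notin C' ->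
        #|nbhd x' :&: [set u in C']| <= #|nbhd x :&: [set u in C]| ].

(* a path from a to b: sequence p with a :: p an e-path ending at b,
   with no repeated vertex *)
Definition is_path (a : T) (p : seq T) (b : T) : bool :=
  [&& path e a p, last a p == b & uniq (a :: p)].

Definition separates (w y : T) (S : {set T}) : Prop :=
  forall (p : seq T) (b : T), b \in S -> is_path y p b -> w \in y :: p.
End Graphs.

(* Main.v *)
Require Import Defs.
From mathcomp Require Import all_boot zify.
Set Implicit Arguments. Unset Strict Implicit.

Lemma cycA (T : finType) (e : rel T) w h t r :
  is_cycle e (w :: h :: t) -> uniq r ->
  (forall u, u \in r -> u \notin w :: h :: t) -> path e w r -> e (last w r) h ->
  is_cycle e (w :: r ++ h :: t) /\ size (w :: r ++ h :: t) = size r + size (w :: h :: t).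
Proof.
move=> /and3P[Hu Hs Hc] Hr Hd Hp He.
have Hsz : size (w :: r ++ h :: t) = size r + size (w :: h :: t).
  by rewrite /= size_cat /= !addnS.
split=> //; apply/and3P; split.
- rewrite cons_uniq mem_cat negb_or cat_uniq Hr.
  move: Hu; rewrite cons_uniq => /andP[-> ->]; rewrite andbT /=.
  apply/andP; split.
    by apply/negP => /Hd; rewrite mem_head.
  rewrite andbT; apply/negP => /orP[/Hd|/hasP[u Ht /Hd]].
    by rewrite !inE eqxx orbT.
  by rewrite !inE Ht !orbT.
- rewrite Hsz; exact: leq_trans Hs (leq_addl _ _).
- move: Hc; rewrite /= rcons_cat cat_path Hp /= He.
  by case/andP.
Qed.
Lemma uniq_catI (T : eqType) (p q : seq T) : uniq p -> uniq q ->
  (forall u, u \in p -> u \notin q) -> uniq (p ++ q).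
Proof.
move=> Hp Hq Hd; rewrite cat_uniq Hp Hq andbT /=.
by apply/hasPn => u Hu; apply/negP => /Hd; rewrite Hu.
Qed.

Lemma last_rev_belast (T : Type) (a : T) s : last (last a s) (rev (belast a s)) = a.
Proof.
elim: s a => [|b s IH] a //=.
by rewrite rev_cons last_rcons.
Qed.

Lemma cycB (T : finType) (e : rel T) w a A' D b s2 Q x :
  symmetric e ->
  is_cycle e (w :: (a :: A') ++ D ++ b :: s2) -> uniq Q ->
  (forall u, u \in Q -> u \notin w :: (a :: A') ++ D ++ b :: s2) ->
  x \notin Q -> x \notin w :: (a :: A') ++ D ++ b :: s2 ->
  path e w Q -> e (last w Q) b -> e (last b s2) x -> e x (last a A') ->
  size D <= size Q ->
  is_cycle e (w :: Q ++ b :: s2 ++ x :: rev (a :: A')) /\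
  size (w :: (a :: A') ++ D ++ b :: s2) < size (w :: Q ++ b :: s2 ++ x :: rev (a :: A')).
Proof.
move=> Hsym /and3P[Hu Hs Hc] HQ Hd Hx1 Hx2 Hp He1 He2 He3 HDQ.
have Hsz : size (w :: (a :: A') ++ D ++ b :: s2) < size (w :: Q ++ b :: s2 ++ x :: rev (a :: A')).
  have Hr : size (rev (a :: A')) = (size A').+1 by rewrite size_rev.
  have Hc1 : forall (u : T) s, size (u :: s) = (size s).+1 by [].
  rewrite !(Hc1, size_cat) Hr. move: HDQ. clear. move: (size A') (size D) (size s2) (size Q) => n1 n2 n3 n4; lia.
split=> //. rewrite /is_cycle. apply/and3P; split; last first.
- move: Hc; rewrite /= !rcons_cat !cat_path /= => /and3P[Hwa HA /andP[_ Hb]].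
  rewrite Hp He1 /=.
  move: Hb => /andP[_]; rewrite rcons_path => /andP[Hs2 _].
  rewrite rcons_cat cat_path Hs2 /= He2 [a :: A']lastI rev_rcons /= He3 /=.
  rewrite rcons_path last_rev_belast rev_path (eq_path (fun u v => Hsym v u)) HA /=.
  by rewrite Hsym.
- exact: leq_trans Hs (ltnW Hsz).
- set A := a :: A'.
  have Hsub : subseq (w :: A ++ b :: s2) (w :: A ++ D ++ b :: s2).
    apply: (cat_subseq (subseq_refl [:: w])).
    exact: cat_subseq (subseq_refl _) (suffix_subseq D _).
  have HK := subseq_uniq Hsub Hu.
  have hC : forall u, u \in w :: A ++ b :: s2 -> u \in w :: A ++ D ++ b :: s2 := mem_subseq Hsub.
  move: (HK); rewrite cons_uniq cat_uniq => /andP[HwK] => /and3P[HA' Hdis Hbs].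
  change (uniq ((w :: Q) ++ ((b :: s2) ++ (x :: rev A)))).
  apply: uniq_catI.
  + rewrite cons_uniq HQ andbT; apply/negP => /Hd; by rewrite mem_head.
  + apply: uniq_catI => //.
      rewrite cons_uniq rev_uniq HA' andbT mem_rev; apply/negP => HxA.
      by move: Hx2; rewrite hC // inE mem_cat HxA orbT.
    move=> u Hu'; rewrite inE mem_rev negb_or; apply/andP; split.
      apply/negP => /eqP Hux; move: Hx2; rewrite -Hux hC //.
      by rewrite inE mem_cat Hu' orbT orbT.
    by move/hasPn: Hdis => /(_ u Hu').
  + move=> u; rewrite inE => /orP[/eqP ->|HuQ].
      rewrite mem_cat inE mem_rev negb_or.
      move: HwK; rewrite mem_cat negb_or => /andP[HwA Hwb]; rewrite Hwb /= negb_or HwA andbT.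
      apply/negP => /eqP Hwx; move: Hx2; by rewrite -Hwx mem_head.
    have := Hd u HuQ; rewrite mem_cat inE mem_rev => HuC.
    apply/negP => /orP[Hub|/orP[/eqP Hux|HuA]].
    * by move: HuC; rewrite hC // inE mem_cat Hub !orbT.
    * by move: Hx1; rewrite -Hux HuQ.
    * by move: HuC; rewrite hC // inE mem_cat HuA !orbT.
Qed.

Lemma path_adj (T : Type) (e : rel T) w L1 u L2 :
  path e w (L1 ++ u :: L2) -> e (last w L1) u.
Proof. by rewrite cat_path => /andP[_] /= /andP[]. Qed.

Lemma cyc_parts (T : finType) (e : rel T) w L :
  is_cycle e (w :: L) -> path e w L /\ e (last w L) w.
Proof. by case/and3P => _ _; rewrite /= rcons_path => /andP[]. Qed.

Theorem lemma3 (T : finType) (e : rel T) (X : {set T}) (n m delta : nat)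
    (C : seq T) (x : T) :
  simple_graph e -> bipartition e X ->
  #|X| = n -> 2 <= n -> #|~: X| = m ->
  (forall v, v \in X -> delta <= #|nbhd e v|) ->
  tight_pair e X C x ->
  n <= delta ->
  (~: X) :&: [set u in C] \subset nbhd e x ->
  forall w y, w \in X -> w \in C -> y \in nbhd e w -> y \notin C ->
    separates e w y ([set u in C] :\ w).
Proof.
move=> [Hsym Hirr] Hbip _ _ _ _ [[HcycC Hlong] HxX HxC _] _ HYsub w y HwX HwC Hy HyC p b Hb Hpath.
apply/negPn/negP => Hw.
have Hadj : forall u v, e u v -> u \in X -> v \notin X.
  by move=> u v /Hbip; case: (u \in X); case: (v \in X).
have HxYC : forall u, u \in C -> u \notin X -> e x u.
  move=> u HuC HuX; have : u \in (~: X) :&: [set u in C] by rewrite !inE HuX HuC.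
  by move/(subsetP HYsub); rewrite inE.
have Hwy : e w y by move: Hy; rewrite inE.
case: (rot_to HwC) => i s Hrot.
have HC0 : is_cycle e (w :: s).
  move: HcycC => /and3P[H1 H2 H3]; rewrite -Hrot; apply/and3P.
  by rewrite rot_uniq size_rot rot_cycle.
have HmemC : forall u, (u \in C) = (u \in w :: s) by move=> u; rewrite -Hrot mem_rot.
have Hmax : forall c', is_cycle e c' -> size c' <= size (w :: s).
  by move=> c' /Hlong; rewrite -Hrot size_rot.
move: Hpath => /and3P[Hpp /eqP Hlast Hup].
have HbC : b \in C by move: Hb; rewrite !inE => /andP[_].
have HyX : y \notin X by apply: Hadj Hwy HwX.
have Hyx : y != x by apply/negP => /eqP Hyx; move: HyX; rewrite Hyx HxX.
have HpW : path e w (y :: p) by rewrite /= Hwy Hpp.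
set a := fun u => (u \in C) || (u == x).
have Hhas : has a (y :: p).
  apply/hasP; exists b; last by rewrite /a HbC.
  by rewrite -Hlast mem_last.
have Hya : ~~ a y by rewrite /a negb_or HyC Hyx.
have Hhd : head y (y :: p) = y by [].
move: HpW Hup Hw Hhd; case: (split_find_nth y Hhas) => z s1 s2' Haz Hnhas.
rewrite cat_path rcons_path cat_uniq rcons_uniq mem_cat mem_rcons inE !negb_or.
move=> /andP[/andP[HpQ HeQ] _] /and3P[/andP[HzQ HuQ] _ _] /andP[/andP[Hwz HwQ] _] Hhd.
have HQne : s1 != [::].
  by case: s1 Hnhas Hhd {HpQ HeQ HzQ HuQ HwQ} => [|? ?] //= _ Hzy; move: Hya; rewrite -Hzy Haz.
have HQa : forall u, u \in s1 -> (u \notin w :: s) && (u != x).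
  move=> u Hu; move/hasPn: Hnhas => /(_ u Hu); by rewrite /a negb_or HmemC.
have Hxs : x \notin w :: s by rewrite -HmemC.
have Hcontra : forall c', is_cycle e c' -> size (w :: s) < size c' -> False.
  by move=> c' /Hmax H1 H2; move: (leq_trans H2 H1); rewrite ltnn.
clear Hrot; case: s HC0 HmemC Hmax Hxs HQa Hcontra => [|h t] HC0 HmemC Hmax Hxs HQa Hcontra.
  by move: HC0 => /and3P[].
have HwCyc := HC0; move: HwCyc => /and3P[_ _ Hcyc].
have Hwh : e w h by move: Hcyc => /= /andP[].
have HxYC' : forall u, u \in w :: h :: t -> u \notin X -> e x u.
  by move=> u; rewrite -HmemC; apply: HxYC.
have Hadj2 : forall u v, e u v -> u \notin X -> v \in X.
  by move=> u v /Hbip; case: (u \in X); case: (v \in X).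
have HhX : h \notin X by apply: Hadj Hwh HwX.
move: Haz; rewrite /a HmemC => /orP[HzC | /eqP Hzx].
2:{ subst z.
  have [] := @cycA _ _ _ _ _ (rcons s1 x) HC0.
  - by rewrite rcons_uniq HzQ.
  - by move=> u; rewrite mem_rcons inE => /orP[/eqP -> //|/HQa /andP[]].
  - by rewrite rcons_path HpQ.
  - by rewrite last_rcons; apply: HxYC' => //; rewrite !inE eqxx orbT.
  move=> Hc Hs; apply: (Hcontra _ Hc); rewrite Hs size_rcons.
  by rewrite addSn ltnS leq_addl. }
move: HzC; rewrite inE eq_sym (negbTE Hwz) /= => Hzs.
have [s1' [s2 Edef]] : exists s1' s2, h :: t = s1' ++ z :: s2.
  by case/splitPr: Hzs => s1' s2; exists s1', s2.
have HzC0 : z \in w :: h :: t by rewrite inE Hzs orbT.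
rewrite Edef in HC0 Hcontra HxYC' HQa Hxs HzC0.
have [Hp0 Hcl] := cyc_parts HC0.
case HzX: (z \in X).
- case: s1' Edef HC0 Hcontra HxYC' HQa Hxs Hp0 Hcl HzC0 => [|a0 A'] Edef HC0 Hcontra HxYC' HQa Hxs Hp0 Hcl HzC0.
    by case: Edef => Ehz _; move: HhX; rewrite Ehz HzX.
  have [] := @cycB _ _ w a0 A' [::] z s2 s1 x Hsym HC0 HuQ.
  + by move=> u /HQa /andP[].
  + by apply/negP => /HQa; rewrite eqxx andbF.
  + exact: Hxs.
  + exact: HpQ.
  + exact: HeQ.
  + rewrite Hsym; apply: HxYC'.
      by rewrite inE mem_cat mem_last !orbT.
    move: Hcl; rewrite last_cat /= Hsym => Hcl.
    exact: Hadj Hcl HwX.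
  + apply: HxYC'.
      by rewrite inE mem_cat mem_last orbT.
    have := path_adj Hp0; rewrite /= Hsym => Hl.
    exact: Hadj Hl _.
  + by [].
  move=> Hc Hs; exact: Hcontra Hc Hs.
- case: s1' Edef HC0 Hcontra HxYC' HQa Hxs Hp0 Hcl HzC0 => [|a1 A1] Edef HC0 Hcontra HxYC' HQa Hxs Hp0 Hcl HzC0.
    have [] := @cycA _ _ _ _ _ s1 HC0 HuQ.
    + by move=> u /HQa /andP[].
    + exact: HpQ.
    + exact: HeQ.
    move=> Hc Hs; apply: (Hcontra _ Hc); rewrite Hs.
    by move: HQne; case: (s1) => //= *; rewrite addSn ltnS leq_addl.
  have [A [xi Exi]] : exists A xi, a1 :: A1 = rcons A xi.
    by exists (belast a1 A1), (last a1 A1); rewrite lastI.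
  rewrite Exi cat_rcons in HC0 Hcontra HxYC' HQa Hxs Hp0 Hcl HzC0.
  have HxiX : xi \in X.
    have := Hp0; rewrite cat_path => /andP[_] /= /and3P[_ Hl _].
    by apply: (Hadj2 z xi); [rewrite Hsym | rewrite HzX].
  case: A Exi HC0 Hcontra HxYC' HQa Hxs Hp0 Hcl HzC0 => [|a0 A'] Exi HC0 Hcontra HxYC' HQa Hxs Hp0 Hcl HzC0.
    by move: Hp0 => /= /andP[Hwxi _]; move: (Hadj _ _ Hwxi HwX); rewrite HxiX.
  have [] := @cycB _ _ w a0 A' [:: xi] z s2 s1 x Hsym HC0 HuQ.
  + by move=> u /HQa /andP[].
  + by apply/negP => /HQa; rewrite eqxx andbF.
  + exact: Hxs.
  + exact: HpQ.
  + exact: HeQ.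
  + rewrite Hsym; apply: HxYC'.
      by rewrite in_cons mem_cat [_ \in xi :: _]in_cons mem_last !orbT.
    move: Hcl; rewrite last_cat /= Hsym => Hcl.
    exact: Hadj Hcl HwX.
  + apply: HxYC'.
      by rewrite inE mem_cat mem_last orbT.
    have := path_adj Hp0; rewrite /= Hsym => Hl.
    exact: Hadj Hl _.
  + by move: HQne; case: (s1).
  move=> Hc Hs; exact: Hcontra Hc Hs.
Qed.
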